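(* Let $X$ be an affine variety and $\mathcal{A}\subseteq\mathcal{D}(X)$ a graded cofinite subalgebra. Then the base $A=\mathcal{A}\cap\mathcal{O}(X)$ is a finitely generated $\mathbb{C}$-algebra and $\mathcal{O}(X)$ is a finitely generated $A$-module. In other words, with $Y=\operatorname{Spec}A$, the morphism $X\to Y$ is a finite surjective morphism of affine varieties.
   Context: Varieties are over $\mathbb{C}$ and irreducible. $\mathcal{D}(X)$ is the algebra of ($\mathbb{C}$-linear, Grothendieck) differential operators on $\mathcal{O}(X)$, filtered by order, with commutative associated graded algebra $\overline{\mathcal{D}}(X)$ (whose degree-$0$ part is $\mathcal{O}(X)$). A subalgebra $\mathcal{A}$ has induced filtration $\mathcal{A}\cap\mathcal{D}(X)_{\le d}$ with associated graded $\overline{\mathcal{A}}\subseteq\overline{\mathcal{D}}(X)$; $\mathcal{A}$ is graded cofinite if $\overline{\mathcal{D}}(X)$ is a finitely generated $\overline{\mathcal{A}}$-module. *)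

(* Defs.v *)
From HB Require Import structures.
From mathcomp Require Import all_boot all_order all_algebra.
From mathcomp Require Import complex.
From mathcomp Require Import Rstruct.
Set Implicit Arguments. Unset Strict Implicit. Unset Printing Implicit Defensive.
Import Order.TTheory GRing.Theory Num.Theory.
Local Open Scope ring_scope.

Definition CC : Type := complex Rdefinitions.R.
HB.instance Definition _ := GRing.Field.on CC.

Section DiffOps.
Variable (R : comAlgType CC).

Definition clinear (P : R -> R) : Prop :=
  forall (c : CC) (x y : R), P (c *: x + y) = c *: P x + P y.

(* Grothendieck differential operators of order <= d on R:
   D_{<=0} = End_R(R);  D_{<=d+1} = {P C-linear | forall r, [P, r] in D_{<=d}}. *)
Fixpoint diffop_le (d : nat) (P : R -> R) : Prop :=
  clinear P /\
  match d with
  | 0 => forall r x : R, P (r * x) = r * P x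
  | d'.+1 => forall r : R, diffop_le d' (fun x => P (r * x) - r * P x)
  end.

(* D_{<= d-1}, with D_{<= -1} = 0. *)
Definition diffop_lt (d : nat) (P : R -> R) : Prop :=
  match d with
  | 0 => forall x, P x = 0
  | d'.+1 => diffop_le d' P
  end.

Definition diffop (P : R -> R) : Prop := exists d, diffop_le d P.

Definition subalg_diffop (A : (R -> R) -> Prop) : Prop :=
  [/\ forall P, A P -> diffop P,
      A (fun x => x),
      forall P Q, A P -> A Q -> A (fun x => P x + Q x),
      forall (c : CC) P, A P -> A (fun x => c *: P x)
    & forall P Q, A P -> A Q -> A (fun x => P (Q x))].

(* An element of
   gr D(X) = (+)_d D_{<=d}/D_{<=d-1} is represented by a finitely supported
   family F : nat -> (R -> R) with F d in D_{<=d}; two families represent the same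
   element iff F d - G d in D_{<=d-1} for all d. *)
Definition fin_supp (F : nat -> R -> R) : Prop :=
  exists N, forall d, (N <= d)%N -> forall x, F d x = 0.

Definition grD_elt (F : nat -> R -> R) : Prop :=
  fin_supp F /\ forall d, diffop_le d (F d).

(* Elements of gr(A) for the induced filtration A_{<=d} = A /\ D_{<=d};
   gr(A) embeds in gr D(X) since A_{<=d-1} = A_{<=d} /\ D_{<=d-1}. *)
Definition grA_elt (A : (R -> R) -> Prop) (F : nat -> R -> R) : Prop :=
  fin_supp F /\ forall d, A (F d) /\ diffop_le d (F d).

Definition gr_equiv (F G : nat -> R -> R) : Prop :=
  forall d, diffop_lt d (fun x => F d x - G d x).

Definition gr_mul (F G : nat -> R -> R) : nat -> R -> R :=
  fun k x => \sum_(i < k.+1) F i (G (k - i)%N x).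

(* A is graded cofinite: gr D(X) is a finitely generated gr(A)-module. *)
Definition graded_cofinite (A : (R -> R) -> Prop) : Prop :=
  exists (m : nat) (g : 'I_m -> nat -> R -> R),
    (forall i, grD_elt (g i)) /\
    forall F, grD_elt F ->
      exists a : 'I_m -> nat -> R -> R,
        (forall i, grA_elt A (a i)) /\
        gr_equiv F (fun k x => \sum_(i < m) gr_mul (a i) (g i) k x).

(* Base of A: A /\ O(X), elements r whose multiplication operator lies in A. *)
Definition base (A : (R -> R) -> Prop) (r : R) : Prop := A (fun x => r * x).

Definition in_gen_subalg (S : seq R) (r : R) : Prop :=
  forall P : R -> Prop,
    (forall s, s \in S -> P s) -> P 1 ->
    (forall x y, P x -> P y -> P (x + y)) ->
    (forall x y, P x -> P y -> P (x * y)) ->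
    (forall (c : CC) x, P x -> P (c *: x)) -> P r.

(* O(X) for an (irreducible) affine variety X: a finitely generated
   commutative C-algebra that is an integral domain. *)
Definition affine_domain : Prop :=
  [/\ (1 : R) != 0,
      forall x y : R, x * y = 0 -> x = 0 \/ y = 0
    & exists S : seq R, forall r, in_gen_subalg S r].

End DiffOps.

(* Main.v *)
Require Import Defs.
From HB Require Import structures.
From mathcomp Require Import all_boot all_order all_algebra.
From mathcomp Require Import complex Rstruct.
From mathcomp Require Import zify.
From Stdlib Require Import Classical FunctionalExtensionality.
Import Order.TTheory GRing.Theory Num.Theory.
Local Open Scope ring_scope.
Set Implicit Arguments. Unset Strict Implicit. Unset Printing Implicit Defensive.

Section Span.
Variables (K : Type) (V : zmodType) (act : K -> V -> V).
Definition gspan (s : seq V) (x : V) : Prop :=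
  forall Q : V -> Prop, Q 0 -> (forall a b, Q a -> Q b -> Q (a + b)) ->
    (forall k a, Q a -> Q (act k a)) -> (forall y, y \in s -> Q y) -> Q x.
Lemma gspan0 s : gspan s 0. Proof. by move=> Q. Qed.
Lemma gspanD s a b : gspan s a -> gspan s b -> gspan s (a + b).
Proof. move=> ha hb Q Q0 QD QA Qs; apply: (QD); [exact: (ha Q) | exact: (hb Q)]. Qed.
Lemma gspanA s k a : gspan s a -> gspan s (act k a).
Proof. move=> ha Q Q0 QD QA Qs; apply: (QA); exact: (ha Q). Qed.
Lemma gspan_mem s y : y \in s -> gspan s y.
Proof. move=> ys Q Q0 QD QA Qs; exact: Qs. Qed.
Lemma gspan_sub s t x : {subset s <= t} -> gspan s x -> gspan t x.
Proof. move=> st hx Q Q0 QD QA Qt; apply: hx => // y ys; apply: Qt; exact: st. Qed.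
End Span.

Definition Noeth (K : comNzRingType) : Prop :=
  forall I : K -> Prop, I 0 -> (forall a b, I a -> I b -> I (a + b)) ->
    (forall k a, I a -> I (k * a)) ->
    exists s : seq K, (forall y, y \in s -> I y) /\ forall x, I x -> gspan *%R s x.

Lemma pick_list (T U : eqType) (P : T -> U -> Prop) (s : seq T) :
  (forall y, y \in s -> exists u, P y u) ->
  exists H : seq U, (forall y, y \in s -> exists2 h, h \in H & P y h) /\
                    (forall h, h \in H -> exists2 y, y \in s & P y h).
Proof.
elim: s => [|y s IH] hP; first by exists [::]; split.
have [u Pu] := hP y (mem_head _ _).
have [|H [H1 H2]] := IH; first by move=> z zs; apply: hP; rewrite in_cons zs orbT.
exists (u :: H); split.
- move=> z; rewrite in_cons => /orP [/eqP -> | zs]; first by exists u; rewrite ?mem_head.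
  by have [h hH Ph] := H1 z zs; exists h; rewrite // in_cons hH orbT.
- move=> h; rewrite in_cons => /orP [/eqP -> | hH]; first by exists y; rewrite ?mem_head.
  by have [z zs Pz] := H2 h hH; exists z; rewrite // in_cons zs orbT.
Qed.

Lemma modpoly (K : comNzRingType) : Noeth K -> forall n (M : {poly K} -> Prop),
  M 0 -> (forall p q, M p -> M q -> M (p + q)) -> (forall k p, M p -> M (k *: p)) ->
  (forall p, M p -> (size p <= n)%N) ->
  exists G, (forall g, g \in G -> M g) /\ forall p, M p -> gspan *:%R G p.
Proof.
move=> NK; elim=> [|n IH] M M0 MD MZ Msz.
  exists [::]; split=> // p Mp.
  have -> : p = 0 by apply/eqP; rewrite -size_poly_eq0 -leqn0 Msz.
  exact: gspan0.
pose L c := exists p, M p /\ p`_n = c.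
have [s [sL sspan]] : exists s : seq K, (forall y, y \in s -> L y) /\ forall x, L x -> gspan *%R s x.
  apply: NK.
  - by exists 0; rewrite coef0.
  - by move=> a b [p [Mp <-]] [q [Mq <-]]; exists (p + q); rewrite coefD; split=> //; exact: MD.
  - by move=> k a [p [Mp <-]]; exists (k *: p); rewrite coefZ; split=> //; exact: MZ.
have [H [H1 H2]] := @pick_list _ _ (fun (y : K) (h : {poly K}) => M h /\ h`_n = y) s sL.
pose M' p := M p /\ (size p <= n)%N.
have [G' [G'1 G'2]] : exists G, (forall g, g \in G -> M' g) /\ forall p, M' p -> gspan *:%R G p.
  apply: IH.
  - by split; rewrite ?size_poly0.
  - move=> p q [Mp sp] [Mq sq]; split; first exact: MD.
    by apply: leq_trans (size_add _ _) _; rewrite geq_max sp sq.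
  - move=> k p [Mp sp]; split; first exact: MZ.
    exact: leq_trans (size_scale_leq _ _) sp.
  - by move=> p [].
exists (H ++ G'); split.
  move=> g; rewrite mem_cat => /orP [gH|gG].
    by have [y _ []] := H2 g gH.
  by have [] := G'1 g gG.
move=> p Mp.
have [h [hs hn]] : exists h, gspan *:%R H h /\ h`_n = p`_n.
  apply: (sspan (p`_n) _ (fun c => exists h, gspan *:%R H h /\ h`_n = c)); first by exists p.
  - by exists 0; rewrite coef0; split=> //; exact: gspan0.
  - move=> a b [h1 [s1 <-]] [h2 [s2 <-]]; exists (h1 + h2); rewrite coefD; split=> //.
    exact: gspanD.
  - move=> k a [h1 [s1 <-]]; exists (k *: h1); rewrite coefZ; split=> //.
    exact: gspanA.
  - move=> y ys; have [h hH [Mh hy]] := H1 y ys.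
    by exists h; split=> //; exact: gspan_mem.
have Mh : M h.
  apply: (hs M M0 MD); first by move=> k a Ma; exact: MZ.
  by move=> y yH; have [z _ []] := H2 y yH.
have Mph : M (p - h) by rewrite -scaleN1r; apply: MD => //; exact: MZ.
have sph : (size (p - h)%R <= n)%N.
  apply/leq_sizeP => j; rewrite leq_eqVlt => /orP [/eqP <-| ltj].
    by rewrite coefB hn subrr.
  exact: (leq_sizeP _ _ (Msz _ Mph)).
have hG : gspan *:%R G' (p - h) by apply: G'2.
have -> : p = h + (p - h) by rewrite addrC subrK.
apply: gspanD.
  by apply: gspan_sub hs => z zH; rewrite mem_cat zH.
by apply: gspan_sub hG => z zH; rewrite mem_cat zH orbT.
Qed.

Lemma shiftX (K : comNzRingType) (p : {poly K}) d e :
  (size p <= d.+1)%N -> (d <= e)%N ->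
  (size ('X^(e - d) * p)%R <= e.+1)%N /\ ('X^(e - d) * p)`_e = p`_d.
Proof.
move=> sp de; split; last first.
  by rewrite coefXnM ltnNge leq_subr /= subKn.
apply/leq_sizeP => j ej; rewrite coefXnM; case: ifP => // _.
apply: (leq_sizeP _ _ sp); lia.
Qed.

Lemma Zspan_to_mul (K : comNzRingType) (G : seq {poly K}) p :
  gspan *:%R G p -> gspan *%R G p.
Proof.
move=> hp; apply: (hp (gspan *%R G)).
- exact: gspan0.
- by move=> a b; apply: gspanD.
- by move=> k a ha; rewrite -mul_polyC; apply: gspanA.
- by move=> y yG; apply: gspan_mem.
Qed.

Lemma hilbert (K : comNzRingType) : Noeth K -> Noeth {poly K}.
Proof.
move=> NK I I0 ID IM.
pose Linf c := exists p d, I p /\ (size p <= d.+1)%N /\ p`_d = c.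
have [s [sL sspan]] : exists s : seq K, (forall y, y \in s -> Linf y) /\
    forall x, Linf x -> gspan *%R s x.
  apply: NK.
  - by exists 0, 0%N; rewrite coef0 size_poly0.
  - move=> a b [p [d1 [Ip [sp <-]]]] [q [d2 [Iq [sq <-]]]].
    have [sp' cp] := shiftX sp (leq_maxl d1 d2).
    have [sq' cq] := shiftX sq (leq_maxr d1 d2).
    exists ('X^(maxn d1 d2 - d1) * p + 'X^(maxn d1 d2 - d2) * q), (maxn d1 d2).
    split; first by apply: ID; apply: IM.
    split; last by rewrite coefD cp cq.
    by apply: leq_trans (size_add _ _) _; rewrite geq_max sp' sq'.
  - move=> k a [p [d [Ip [sp <-]]]]; exists (k%:P * p), d; split; first exact: IM.
    by rewrite coefCM mul_polyC; split=> //; apply: leq_trans (size_scale_leq _ _) sp.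
have [N HN] : exists N, forall y, y \in s -> exists p, I p /\ (size p <= N.+1)%N /\ p`_N = y.
  elim: s sL {sspan} => [|y s IH] sL; first by exists 0%N.
  have [|N' HN'] := IH; first by move=> z zs; apply: sL; rewrite in_cons zs orbT.
  have [p [d [Ip [sp py]]]] := sL y (mem_head _ _).
  exists (maxn N' d) => z; rewrite in_cons => /orP [/eqP -> | zs].
    have [sp' cp] := shiftX sp (leq_maxr N' d).
    by exists ('X^(maxn N' d - d) * p); split; [exact: IM | split=> //; rewrite cp].
  have [q [Iq [sq qz]]] := HN' z zs.
  have [sq' cq] := shiftX sq (leq_maxl N' d).
  by exists ('X^(maxn N' d - N') * q); split; [exact: IM | split=> //; rewrite cq].
pose M p := I p /\ (size p <= N.+1)%N.
have HM : exists G, (forall g, g \in G -> M g) /\ forall p, M p -> gspan *:%R G p.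
  apply: (@modpoly K NK N.+1 M).
  - by split; rewrite ?size_poly0.
  - move=> p q [Mp sp] [Mq sq]; split; first exact: ID.
    by apply: leq_trans (size_add _ _) _; rewrite geq_max sp sq.
  - move=> k p [Mp sp]; split; first by rewrite -mul_polyC; exact: IM.
    exact: leq_trans (size_scale_leq _ _) sp.
  - by move=> p [].
have [G [G1 G2]] := HM.
exists G; split; first by move=> g /G1 [].
suff main : forall d (p : {poly K}), (size p <= d.+1)%N -> I p -> gspan *%R G p.
  by move=> x Ix; apply: (main (size x)) => //; apply: leqnSn.
elim=> [|d IHd] p sp Ip.
  by apply: Zspan_to_mul; apply: G2; split=> //; apply: leq_trans sp _.
case: (leqP d.+1 N) => hdN.
  by apply: Zspan_to_mul; apply: G2; split=> //; apply: leq_trans sp _.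
set e := d.+1 in sp hdN *.
have Le : Linf p`_e by exists p, e.
have [h [hs [Ih [sh he]]]] : exists h, gspan *%R G h /\ I h /\ (size h <= e.+1)%N /\ h`_e = p`_e.
  apply: (sspan _ Le (fun c => exists h, gspan *%R G h /\ I h /\ (size h <= e.+1)%N /\ h`_e = c)).
  - by exists 0; rewrite coef0 size_poly0; split; [exact: gspan0|split].
  - move=> a b [h1 [g1 [I1 [s1 <-]]]] [h2 [g2 [I2 [s2 <-]]]].
    exists (h1 + h2); split; first exact: gspanD.
    split; first exact: ID.
    split; last by rewrite coefD.
    by apply: leq_trans (size_add _ _) _; rewrite geq_max s1 s2.
  - move=> k a [h1 [g1 [I1 [s1 <-]]]].
    exists (k%:P * h1); split; first exact: gspanA.
    split; first exact: IM.
    by rewrite coefCM mul_polyC; split=> //; apply: leq_trans (size_scale_leq _ _) s1.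
  - move=> y ys; have [q [Iq [sq qy]]] := HN y ys.
    have [sq' cq] := shiftX sq (ltnW hdN).
    exists ('X^(e - N) * q); split.
      by apply: gspanA; apply: Zspan_to_mul; apply: G2.
    by split; [exact: IM | split=> //; rewrite cq].
have Iph : I (p - h) by rewrite -mulN1r; apply: ID => //; exact: IM.
have sph : (size (p - h)%R <= d.+1)%N.
  apply/leq_sizeP => j; rewrite leq_eqVlt => /orP [/eqP <-| ltj].
    by rewrite coefB he subrr.
  apply: (leq_sizeP _ _ (_ : size (p - h)%R <= e.+1)%N) => //.
  by apply: leq_trans (size_add _ _) _; rewrite size_opp geq_max sp sh.
have -> : p = h + (p - h) by rewrite addrC subrK.
by apply: gspanD => //; apply: IHd.
Qed.

Lemma NoethCC : Noeth CC.
Proof.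
move=> I I0 ID IM.
case: (classic (exists x, I x /\ x != 0)) => [[x [Ix x0]] | nx].
  exists [:: x]; split; first by move=> y; rewrite inE => /eqP ->.
  move=> y _; rewrite -(divfK x0 y); apply: gspanA; apply: gspan_mem; exact: mem_head.
exists [::]; split=> // y Iy.
have -> : y = 0.
  by apply: NNPP => ny; apply: nx; exists y; split=> //; apply/eqP.
exact: gspan0.
Qed.

Fixpoint Pm (k : nat) : comNzRingType :=
  if k is k'.+1 then {poly Pm k'} : comNzRingType else CC : comNzRingType.

Lemma NoethPm k : Noeth (Pm k).
Proof. elim: k => [|k IH] /=; [exact: NoethCC | exact: hilbert]. Qed.

Section Main.
Variable R : comAlgType CC.

Lemma diffop_le_zero k : diffop_le k (fun _ : R => 0).
Proof.
elim: k => [|k IH] /=; split.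
- by move=> c x y; rewrite scaler0 addr0.
- by move=> r x; rewrite mulr0.
- by move=> c x y; rewrite scaler0 addr0.
- move=> r; have -> : (fun x : R => 0 - r * 0) = (fun _ => 0) :> (R -> R).
    by apply: functional_extensionality => x; rewrite mulr0 subrr.
  exact: IH.
Qed.

Lemma base_mulE (A : (R -> R) -> Prop) (P : R -> R) :
  A P -> diffop_le 0 P -> base A (P 1).
Proof.
move=> AP [_ HP]; rewrite /base.
have -> : (fun x => P 1 * x) = P; last exact: AP.
apply: functional_extensionality => x.
by rewrite -{2}(mulr1 x) HP mulrC.
Qed.

Lemma modfin (A : (R -> R) -> Prop) : subalg_diffop A -> graded_cofinite A ->
  exists n (t : 'I_n -> R), forall r, exists a : 'I_n -> R,
    (forall i, base A (a i)) /\ r = \sum_(i < n) a i * t i.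
Proof.
move=> HA [n [g [_ Hg]]]; exists n, (fun i => g i 0%N 1) => r.
pose F : nat -> R -> R := fun k x => if k == 0%N then r * x else 0.
have GF : grD_elt F.
  split; first by exists 1%N => -[|d] //.
  case=> [|d] /=.
    split; first by move=> c x y; rewrite /F /= mulrDr scalerAr.
    by move=> s x; rewrite /F /= mulrCA.
  rewrite /F /=.
  exact (@diffop_le_zero d.+1).
have [a [Ha Heq]] := Hg F GF.
have Ha0 i : diffop_le 0 (a i 0%N) by have [_ /(_ 0%N) []] := Ha i.
have HaA i : A (a i 0%N) by have [_ /(_ 0%N) []] := Ha i.
exists (fun i => a i 0%N 1); split; first by move=> i; apply: base_mulE.
have := Heq 0%N 1; rewrite /= /F /gr_mul /= mulr1 => /eqP; rewrite subr_eq0 => /eqP ->.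
apply: eq_bigr => i _; rewrite big_ord1 /= subnn.
have [_ H0] := Ha0 i.
by rewrite -{1}(mulr1 (g i 0%N 1)) H0 mulrC.
Qed.

Fixpoint ev (bs : seq R) : {rmorphism Pm (size bs) -> R} :=
  match bs with
  | [::] => GRing.in_alg R : {rmorphism CC -> R}
  | b :: bs' => horner_morph (fun a => mulrC b (ev bs' a)) : {rmorphism _ -> R}
  end.

Lemma ev_cons b bs p : ev (b :: bs) p = (map_poly (ev bs) p).[b].
Proof. by []. Qed.

Lemma ev_mem bs b : b \in bs -> exists p, ev bs p = b.
Proof.
elim: bs => [|c bs IH] //; rewrite in_cons => /orP [/eqP -> | hb].
  by exists 'X; rewrite ev_cons map_polyX hornerX.
have [p hp] := IH hb; exists p%:P.
by rewrite ev_cons map_polyC hornerC.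
Qed.

Lemma ev_scal bs (k : CC) : exists p, ev bs p = k%:A.
Proof.
elim: bs => [|c bs [p hp]]; first by exists k.
by exists p%:P; rewrite ev_cons map_polyC hornerC.
Qed.

Section IG.
Variable S : seq R.
Lemma ig_mem s : s \in S -> in_gen_subalg S s.
Proof. by move=> sS P PS *; apply: PS. Qed.
Lemma ig1 : in_gen_subalg S 1.
Proof. by move=> P PS P1. Qed.
Lemma igD x y : in_gen_subalg S x -> in_gen_subalg S y -> in_gen_subalg S (x + y).
Proof. move=> hx hy P PS P1 PD PM PZ; apply: (PD); [exact: hx | exact: hy]. Qed.
Lemma igM x y : in_gen_subalg S x -> in_gen_subalg S y -> in_gen_subalg S (x * y).
Proof. move=> hx hy P PS P1 PD PM PZ; apply: (PM); [exact: hx | exact: hy]. Qed.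
Lemma igZ c x : in_gen_subalg S x -> in_gen_subalg S (c *: x).
Proof. move=> hx P PS P1 PD PM PZ; apply: (PZ); exact: hx. Qed.
Lemma ig0 : in_gen_subalg S 0.
Proof. by rewrite -(scale0r 1); apply: igZ; apply: ig1. Qed.
End IG.

Lemma ig_sub (S T : seq R) x : {subset S <= T} -> in_gen_subalg S x -> in_gen_subalg T x.
Proof. move=> ST hx P PT; apply: hx => s sS; apply: PT; exact: ST. Qed.

Lemma ev_gen bs p : in_gen_subalg bs (ev bs p).
Proof.
elim: bs p => [|b bs IH] p.
  by rewrite /=; apply: igZ; apply: ig1.
rewrite ev_cons horner_coef.
apply: (big_ind (in_gen_subalg (b :: bs))); [exact: ig0 | exact: igD |].
move=> i _; rewrite coef_map; apply: igM.
  by apply: ig_sub (IH _) => z zs; rewrite in_cons zs orbT.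
elim: (nat_of_ord i) => [|j IHj]; first by rewrite expr0; apply: ig1.
by rewrite exprS; apply: igM => //; apply: ig_mem; apply: mem_head.
Qed.

Lemma ig_base (A : (R -> R) -> Prop) S : subalg_diffop A ->
  (forall s, s \in S -> base A s) -> forall r, in_gen_subalg S r -> base A r.
Proof.
move=> [Hd Hid HD HZ HM] HS r hr; apply: hr => //; rewrite /base.
- have -> : (fun x : R => 1 * x) = (fun x => x) by apply: functional_extensionality => x; rewrite mul1r.
  exact: Hid.
- move=> x y hx hy.
  have -> : (fun z : R => (x + y) * z) = (fun z => x * z + y * z).
    by apply: functional_extensionality => z; rewrite mulrDl.
  exact: HD.
- move=> x y hx hy.
  have -> : (fun z : R => (x * y) * z) = (fun z => x * (y * z)).
    by apply: functional_extensionality => z; rewrite mulrA.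
  exact: HM.
- move=> c x hx.
  have -> : (fun z : R => (c *: x) * z) = (fun z => c *: (x * z)).
    by apply: functional_extensionality => z; rewrite scalerAl.
  exact: HZ.
Qed.

Lemma collect (A : (R -> R) -> Prop) n (t : 'I_n -> R) :
  (forall r, exists a : 'I_n -> R, (forall i, base A (a i)) /\ r = \sum_(i < n) a i * t i) ->
  forall rs : seq R, exists bs : seq R, (forall b, b \in bs -> base A b) /\
    forall x, x \in rs -> exists a : 'I_n -> R, (forall i, a i \in bs) /\ x = \sum_(i < n) a i * t i.
Proof.
move=> Ht; elim=> [|x rs [bs [bsB bsH]]]; first by exists [::].
have [a [aB ax]] := Ht x.
exists (bs ++ [seq a i | i <- enum 'I_n]); split.
  move=> b; rewrite mem_cat => /orP [/bsB // | /mapP [i _ ->]]; exact: aB.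
move=> y; rewrite in_cons => /orP [/eqP -> | yr].
  by exists a; split=> // i; rewrite mem_cat map_f ?orbT ?mem_enum.
have [a' [a'B ->]] := bsH y yr.
by exists a'; split=> // i; rewrite mem_cat a'B.
Qed.

End Main.

Unset Implicit Arguments.

Theorem proposition2p1 (R : comAlgType CC) (A : (R -> R) -> Prop) :
  affine_domain R ->
  subalg_diffop A ->
  graded_cofinite A ->
  (* the base A /\ O(X) is a finitely generated C-algebra *)
  (exists S : seq R, (forall s, s \in S -> base A s) /\
     forall r, base A r -> in_gen_subalg S r) /\
  (* O(X) is a finitely generated module over the base *)
  (exists (n : nat) (t : 'I_n -> R), forall r : R,
     exists a : 'I_n -> R, (forall i, base A (a i)) /\ r = \sum_(i < n) a i * t i).
Proof.
move=> [_ _ [S0 HS0]] HA Hgc.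
have [n [t Ht]] := modfin HA Hgc.
split; last by exists n, t.
pose rs := 1 :: S0 ++ [seq t i * t j | i <- enum 'I_n, j <- enum 'I_n].
have [bs [bsB bsH]] := collect Ht rs.
pose P := Pm (size bs).
pose phi := ev bs.
have Vrs : forall x, x \in rs -> exists c : 'I_n -> P, x = \sum_(i < n) phi (c i) * t i.
  move=> x /bsH [a [abs ->]].
  have : forall i, exists p : P, phi p = a i by move=> i; exact: ev_mem.
  case/fin_all_exists => c hc; exists c; apply: eq_bigr => i _; rewrite hc.
  done.
pose V x := exists c : 'I_n -> P, x = \sum_(i < n) phi (c i) * t i.
have Vall : forall r, V r.
  move=> r; apply: (HS0 r V).
  - by move=> s sS; apply: Vrs; rewrite in_cons mem_cat sS orbT.
  - by apply: Vrs; exact: mem_head.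
  - move=> x y [c ->] [c' ->]; exists (fun i => c i + c' i); rewrite -big_split.
    by apply: eq_bigr => i _; rewrite rmorphD mulrDl.
  - move=> x y [c ->] [c' ->].
    have He0 : forall i j, exists e : 'I_n -> P, t i * t j = \sum_(l < n) phi (e l) * t l.
      move=> i j; apply: Vrs.
      by rewrite in_cons mem_cat (allpairs_f (fun i j => t i * t j)) ?mem_enum ?orbT.
    have He1 : forall i, exists f : 'I_n -> 'I_n -> P, forall j,
        t i * t j = \sum_(l < n) phi (f j l) * t l.
      move=> i; apply: (@fin_all_exists _ (fun _ => 'I_n -> P) (fun j (f : 'I_n -> P) => t i * t j = \sum_(l < n) phi (f l) * t l)); exact: He0.
    have [e He] := fin_all_exists He1.
    exists (fun l => \sum_(i < n) \sum_(j < n) c i * c' j * e i j l).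
    rewrite mulr_suml.
    transitivity (\sum_(i < n) \sum_(j < n) \sum_(l < n) phi (c i * c' j * e i j l) * t l).
      apply: eq_bigr => i _; rewrite mulr_sumr; apply: eq_bigr => j _.
      rewrite mulrACA He mulr_sumr; apply: eq_bigr => l _.
      by rewrite !rmorphM !mulrA.
    under eq_bigr do rewrite exchange_big.
    rewrite exchange_big; apply: eq_bigr => l _.
    rewrite rmorph_sum mulr_suml; apply: eq_bigr => i _.
    by rewrite rmorph_sum mulr_suml.
  - move=> k x [c ->]; have [pk hpk] := ev_scal bs k.
    exists (fun i => pk * c i); rewrite scaler_sumr; apply: eq_bigr => i _.
    by rewrite rmorphM hpk mulr_algl scalerAl.
have phiB : forall p : P, base A (phi p).
  by move=> p; apply: (ig_base HA bsB); apply: ev_gen.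
have base0 : base A 0 by apply: (ig_base HA (S := [::])) => //; apply: ig0.
have baseD : forall x y, base A x -> base A y -> base A (x + y).
  move=> x y hx hy; apply: (ig_base HA (S := [:: x; y])).
    by move=> s; rewrite !inE => /orP [/eqP -> | /eqP ->].
  by apply: igD; apply: ig_mem; rewrite !inE eqxx ?orbT.
have baseM : forall x y, base A x -> base A y -> base A (x * y).
  move=> x y hx hy; apply: (ig_base HA (S := [:: x; y])).
    by move=> s; rewrite !inE => /orP [/eqP -> | /eqP ->].
  by apply: igM; apply: ig_mem; rewrite !inE eqxx ?orbT.
pose psi (p : {poly P}) := \sum_(i < n) phi p`_i * t i.
have psi0 : psi 0 = 0 by rewrite /psi big1 // => i _; rewrite coef0 rmorph0 mul0r.
have psiD : forall p q, psi (p + q) = psi p + psi q.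
  by move=> p q; rewrite /psi -big_split; apply: eq_bigr => i _; rewrite coefD rmorphD mulrDl.
have psiZ : forall k p, psi (k *: p) = phi k * psi p.
  by move=> k p; rewrite /psi mulr_sumr; apply: eq_bigr => i _; rewrite coefZ rmorphM mulrA.
pose M (p : {poly P}) := (size p <= n)%N /\ base A (psi p).
have [G [G1 G2]] : exists G, (forall g, g \in G -> M g) /\ forall p, M p -> gspan *:%R G p.
  have NP : Noeth P by move=> I; apply: (@NoethPm (size bs) I).
  apply: (@modpoly P NP n M).
  - by split; rewrite ?size_poly0 ?psi0.
  - move=> p q [sp bp] [sq bq]; split; last by rewrite psiD; apply: baseD.
    by apply: leq_trans (size_add _ _) _; rewrite geq_max sp sq.
  - move=> k p [sp bp]; split; last by rewrite psiZ; apply: baseM.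
    exact: leq_trans (size_scale_leq _ _) sp.
  - by move=> p [].
exists (bs ++ map psi G); split.
  move=> s; rewrite mem_cat => /orP [/bsB // | /mapP [g gG ->]].
  by have [] := G1 g gG.
move=> r Br; have [c hc] := Vall r.
pose p : {poly P} := \poly_(j < n) (if insub j is Some i then c i else 0).
have pr : psi p = r.
  rewrite hc /psi; apply: eq_bigr => i _; rewrite coef_poly ltn_ord.
  by rewrite (valK i).
have Mp : M p by split; [exact: size_poly | rewrite pr].
rewrite -pr; apply: (G2 p Mp (fun q => in_gen_subalg (bs ++ map psi G) (psi q))).
- by rewrite psi0; apply: ig0.
- by move=> a b ha hb; rewrite psiD; apply: igD.
- move=> k a ha; rewrite psiZ; apply: igM => //.
  by apply: (ig_sub _ (@ev_gen R bs k)) => z zs; rewrite mem_cat zs.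
- by move=> g gG; apply: ig_mem; rewrite mem_cat map_f ?gG ?orbT.
Qed.
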